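(* Let $\mathbb K$ be $\mathbb R$ or $\mathbb C$ and let $(\mathcal P,\cdot,[\,,\,])$ be a transposed Poisson superalgebra over $\mathbb K$. Let $D:\mathcal P\to\mathcal P$ be an even derivation of the Lie superalgebra $(\mathcal P,[\,,\,])$, i.e. $D$ is linear, $|D(x)|=|x|$ and $D([x,y])=[D(x),y]+[x,D(y)]$ for homogeneous $x,y$. Then for all homogeneous $x,y,z\in\mathcal P$, $$D(x)\cdot D([y,z])+(-1)^{|x|(|y|+|z|)}D(y)\cdot D([z,x])+(-1)^{(|x|+|y|)|z|}D(z)\cdot D([x,y])$$ $$+\,x\cdot[D(y),D(z)]+(-1)^{|x|(|y|+|z|)}\,y\cdot[D(z),D(x)]+(-1)^{(|x|+|y|)|z|}\,z\cdot[D(x),D(y)]=0.$$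
   Context: A transposed Poisson superalgebra is a triple $(\mathcal P,\cdot,[\,,\,])$ where $\mathcal P=\mathcal P_0\oplus\mathcal P_1$ is a super vector space over $\mathbb K$, $(\mathcal P,\cdot)$ is a commutative associative superalgebra, $(\mathcal P,[\,,\,])$ is a Lie superalgebra, and for all homogeneous $x,y,z\in\mathcal P$ one has $2\,z\cdot[x,y]=[z\cdot x,y]+(-1)^{|x||z|}[x,z\cdot y]$. Here $|x|\in\mathbb Z_2$ denotes the parity of a homogeneous element. *)

(* Defs.v *)
From HB Require Import structures.
From mathcomp Require Import all_boot all_order all_algebra.
Set Implicit Arguments. Unset Strict Implicit. Unset Printing Implicit Defensive.
Import Order.TTheory GRing.Theory Num.Theory.
Local Open Scope ring_scope.

(* Parities live in Z_2, encoded as bool (false = 0, true = 1; addition = addb,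
   product = andb).  The sign (-1)^p in the ground field: *)
Definition sgn (K : ringType) (p : bool) : K := (-1) ^+ p.

(* A super vector space P = P_0 (+) P_1 is modelled as the product V0 * V1.
   [homog p x] : x is homogeneous of parity p, i.e. x lies in P_p. *)
Definition homog (K : ringType) (V0 V1 : lmodType K) (p : bool) (x : V0 * V1) : Prop :=
  if p then x.1 = 0 else x.2 = 0.

Record transposed_Poisson_superalgebra (K : fieldType) (V0 V1 : lmodType K)
    (mul br : V0 * V1 -> V0 * V1 -> V0 * V1) : Prop := {
  mul_linl : forall (a : K) x y z, mul (a *: x + y) z = a *: mul x z + mul y z;
  mul_linr : forall (a : K) x y z, mul z (a *: x + y) = a *: mul z x + mul z y;
  br_linl : forall (a : K) x y z, br (a *: x + y) z = a *: br x z + br y z;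
  br_linr : forall (a : K) x y z, br z (a *: x + y) = a *: br z x + br z y;
  mul_homog : forall p q x y, homog p x -> homog q y -> homog (p (+) q) (mul x y);
  br_homog : forall p q x y, homog p x -> homog q y -> homog (p (+) q) (br x y);
  mul_supercomm : forall p q x y, homog p x -> homog q y ->
      mul x y = sgn K (p && q) *: mul y x;
  mul_assoc : forall x y z, mul (mul x y) z = mul x (mul y z);
  br_superanti : forall p q x y, homog p x -> homog q y ->
      br x y = - (sgn K (p && q) *: br y x);
  br_superjacobi : forall p q r x y z, homog p x -> homog q y -> homog r z ->
      sgn K (p && r) *: br x (br y z) + sgn K (q && p) *: br y (br z x)
      + sgn K (r && q) *: br z (br x y) = 0;
  tp_rule : forall p q r x y z, homog p x -> homog q y -> homog r z ->
      2 *: mul z (br x y) = br (mul z x) y + sgn K (p && r) *: br x (mul z y)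
}.

Record even_derivation (K : fieldType) (V0 V1 : lmodType K)
    (br : V0 * V1 -> V0 * V1 -> V0 * V1) (D : V0 * V1 -> V0 * V1) : Prop := {
  der_lin : forall (a : K) x y, D (a *: x + y) = a *: D x + D y;
  der_even : forall p x, homog p x -> homog p (D x);
  der_leibniz : forall p q x y, homog p x -> homog q y ->
      D (br x y) = br (D x) y + br x (D y)
}.

(* Main.v *)
Require Import Defs.
From HB Require Import structures.
From mathcomp Require Import all_boot all_order all_algebra.
Import Order.TTheory GRing.Theory Num.Theory.
Local Open Scope ring_scope.
Set Implicit Arguments. Unset Strict Implicit.
Lemma brZl {K : numFieldType} {V0 V1 : lmodType K} {mul br : V0 * V1 -> V0 * V1 -> V0 * V1} (H : transposed_Poisson_superalgebra mul br) k x y :  br (k *: x) y = k *: br x y.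
Proof.
have h0 : br 0 y = 0.
  have := br_linl H 1 0 0 y; rewrite !scale1r addr0 => e.
  by rewrite -{1}[br 0 y]addr0 in e; exact: esym (addrI _ e).
by have := br_linl H k x 0 y; rewrite addr0 h0 addr0.
Qed.
Lemma brZr {K : numFieldType} {V0 V1 : lmodType K} {mul br : V0 * V1 -> V0 * V1 -> V0 * V1} (H : transposed_Poisson_superalgebra mul br) k x y :  br y (k *: x) = k *: br y x.
Proof.
have h0 : br y 0 = 0.
  have := br_linr H 1 0 0 y; rewrite !scale1r addr0 => e.
  by rewrite -{1}[br y 0]addr0 in e; exact: esym (addrI _ e).
by have := br_linr H k x 0 y; rewrite addr0 h0 addr0.
Qed.
Lemma mulDr {K : numFieldType} {V0 V1 : lmodType K} {mul br : V0 * V1 -> V0 * V1 -> V0 * V1} (H : transposed_Poisson_superalgebra mul br) x y z : mul z (x + y) = mul z x + mul z y.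
Proof. by have := mul_linr H 1 x y z; rewrite !scale1r. Qed.
Lemma mulZr {K : numFieldType} {V0 V1 : lmodType K} {mul br : V0 * V1 -> V0 * V1 -> V0 * V1} (H : transposed_Poisson_superalgebra mul br) k x y :  mul y (k *: x) = k *: mul y x.
Proof.
have h0 : mul y 0 = 0.
  have := mul_linr H 1 0 0 y; rewrite !scale1r addr0 => e.
  by rewrite -{1}[mul y 0]addr0 in e; exact: esym (addrI _ e).
by have := mul_linr H k x 0 y; rewrite addr0 h0 addr0.
Qed.

Lemma cyc {K : numFieldType} {V0 V1 : lmodType K} {mul br : V0 * V1 -> V0 * V1 -> V0 * V1} (H : transposed_Poisson_superalgebra mul br) p q r a b c : homog p a -> homog q b -> homog r c ->
  mul a (br b c) + sgn K (p && (q (+) r)) *: mul b (br c a)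
   + sgn K ((p (+) q) && r) *: mul c (br a b) = 0.
Proof.
move=> ha hb hc.
have E1 := tp_rule H hb hc ha.
have E2 := tp_rule H hc ha hb.
have E3 := tp_rule H ha hb hc.
rewrite (mul_supercomm H ha hc) (brZr H) (br_superanti H hb (mul_homog H hc ha)) in E1.
rewrite (mul_supercomm H hb ha) (brZr H) (br_superanti H hc (mul_homog H ha hb)) in E2.
rewrite (mul_supercomm H hc hb) (brZr H) (br_superanti H ha (mul_homog H hb hc)) in E3.
set S := (X in X = 0).
have two : (2 : K) != 0 by rewrite pnatr_eq0.
suff : 2 *: S = 0 by move=> e; rewrite -[S]scale1r -(mulVf two) -scalerA e scaler0.
rewrite /S !scalerDr !scalerA ![2 * sgn _ _]mulrC -!scalerA E1 E2 E3.
set U := br (mul a b) c. set V := br (mul b c) a. set W := br (mul c a) b.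
rewrite !scalerDr !scalerN !scalerA.
have -> : sgn K (q && p) * sgn K (p && r) * sgn K (q && (r (+) p)) = sgn K ((p (+) q) && r)
  by destruct p, q, r; rewrite /sgn /=; do ![rewrite expr0|rewrite expr1|rewrite mulrNN|rewrite mul1r|rewrite mulr1].
have -> : sgn K (p && (q (+) r)) * sgn K (r && q) * sgn K (q && p) * sgn K (r && (p (+) q)) = 1
  by destruct p, q, r; rewrite /sgn /=; do ![rewrite expr0|rewrite expr1|rewrite mulrNN|rewrite mul1r|rewrite mulr1].
have -> : sgn K ((p (+) q) && r) * sgn K (p && r) * sgn K (r && q) * sgn K (p && (q (+) r)) = sgn K (p && (q (+) r))
  by destruct p, q, r; rewrite /sgn /=; do ![rewrite expr0|rewrite expr1|rewrite mulrNN|rewrite mul1r|rewrite mulr1].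
rewrite scale1r (AC ((2*2)*2) ((1*4)*(2*5)*(3*6))) /=.
by rewrite subrr addNr subrr !addr0.
Qed. 
Theorem lemma7 (K : numFieldType) (V0 V1 : lmodType K)
    (mul br : V0 * V1 -> V0 * V1 -> V0 * V1) (D : V0 * V1 -> V0 * V1) :
  transposed_Poisson_superalgebra mul br ->
  even_derivation br D ->
  forall (p q r : bool) (x y z : V0 * V1),
    homog p x -> homog q y -> homog r z ->
    mul (D x) (D (br y z))
    + sgn K (p && (q (+) r)) *: mul (D y) (D (br z x))
    + sgn K ((p (+) q) && r) *: mul (D z) (D (br x y))
    + mul x (br (D y) (D z))
    + sgn K (p && (q (+) r)) *: mul y (br (D z) (D x))
    + sgn K ((p (+) q) && r) *: mul z (br (D x) (D y)) = 0.
Proof.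
move=> H HD p q r x y z hx hy hz.
have dx := der_even HD hx. have dy := der_even HD hy. have dz := der_even HD hz.
have I1 := cyc H dx dy hz.
have I2 := congr1 (fun v => sgn K (p && (q (+) r)) *: v) (cyc H dy dz hx).
have I3 := congr1 (fun v => sgn K ((p (+) q) && r) *: v) (cyc H dz dx hy).
rewrite /= scaler0 !scalerDr !scalerA in I2 I3.
have s1 : sgn K (p && (q (+) r)) * sgn K (q && (r (+) p)) = sgn K ((p (+) q) && r)
  by destruct p, q, r; rewrite /sgn /=; do ![rewrite expr0|rewrite expr1|rewrite mulrNN|rewrite mul1r|rewrite mulr1].
have s2 : sgn K (p && (q (+) r)) * sgn K ((q (+) r) && p) = 1
  by destruct p, q, r; rewrite /sgn /=; do ![rewrite expr0|rewrite expr1|rewrite mulrNN|rewrite mul1r|rewrite mulr1].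
have s3 : sgn K ((p (+) q) && r) * sgn K (r && (p (+) q)) = 1
  by destruct p, q, r; rewrite /sgn /=; do ![rewrite expr0|rewrite expr1|rewrite mulrNN|rewrite mul1r|rewrite mulr1].
have s4 : sgn K ((p (+) q) && r) * sgn K ((r (+) p) && q) = sgn K (p && (q (+) r))
  by destruct p, q, r; rewrite /sgn /=; do ![rewrite expr0|rewrite expr1|rewrite mulrNN|rewrite mul1r|rewrite mulr1].
rewrite s1 s2 scale1r in I2. rewrite s3 s4 scale1r scaler0 in I3.
rewrite !(der_leibniz HD hy hz, der_leibniz HD hz hx, der_leibniz HD hx hy) !(mulDr H) !scalerDr.
rewrite (AC ((((2*2)*2)*1)*1*1) (((1*4*9)*(3*6*7))*(5*2*8))) /=.
by rewrite I1 I2 I3 !addr0.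
Qed.
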